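(* Let $d$ be an integer and let $C_1$ and $C_2$ be the curves $$C_1: y^2=x^3-d^2x,\qquad C_2: y^2=x^3+d^2x.$$ For a prime $p>2$ let $N_{p,i}$ be the number of solutions $(x,y)\in\mathbb{Z}_p\times\mathbb{Z}_p$ of the defining equation of $C_i$ taken modulo $p$, and $a_{p,i}=p-N_{p,i}$. Then $a_{p,1}+a_{p,2}=0$ for every prime $p>2$ such that $-1\in QR_p$ and $\epsilon\in QNR_p$, where $\epsilon\in\mathbb{Z}_p^*$ satisfies $\epsilon^2\equiv-1\pmod p$.
   Context: $\mathbb{Z}_p$ denotes the integers modulo $p$, $\mathbb{Z}_p^*=\{1,\dots,p-1\}$. $QR_p=\{x\in\mathbb{Z}_p^*: \exists y\in\mathbb{Z}_p^*,\ y^2\equiv x \pmod p\}$ is the set of nonzero quadratic residues modulo $p$ and $QNR_p=\mathbb{Z}_p^*\setminus QR_p$ the set of quadratic nonresidues. *)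

(* Defs.v *)
From mathcomp Require Import all_boot all_order all_algebra.
Set Implicit Arguments. Unset Strict Implicit. Unset Printing Implicit Defensive.
Import GRing.Theory.
Local Open Scope ring_scope.

Definition QR (p : nat) (x : 'F_p) : bool :=
  (x != 0) && [exists y : 'F_p, (y != 0) && (y ^+ 2 == x)].
Definition QNR (p : nat) (x : 'F_p) : bool := (x != 0) && ~~ QR x.

Definition Npts (p : nat) (c : int) : nat :=
  #|[set xy : 'F_p * 'F_p | xy.2 ^+ 2 == xy.1 ^+ 3 + c%:~R * xy.1]|.

Definition a_p1 (p : nat) (d : int) : int := (p%:Z - (Npts p (- d ^+ 2))%:Z)%R.
Definition a_p2 (p : nat) (d : int) : int := (p%:Z - (Npts p (d ^+ 2))%:Z)%R.

(* Main.v *)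
Require Import Defs.
From mathcomp Require Import all_boot all_order all_fingroup all_algebra all_solvable.
Set Implicit Arguments. Unset Strict Implicit. Unset Printing Implicit Defensive.

Import GRing.Theory.
Local Open Scope ring_scope.

Lemma prod_nsq (F : finFieldType) (a b : F) : a != 0 -> b != 0 ->
  (forall y, y ^+ 2 != a) -> (forall y, y ^+ 2 != b) -> exists y, y ^+ 2 = a * b.
Proof.
move=> a0 b0 na nb.
have /cyclicP [g Hg] := field_unit_group_cyclic [set: {unit F}]%G.
have pw : forall c : F, c != 0 -> exists i, c = FinRing.uval g ^+ i.
  move=> c c0; have uc : c \is a GRing.unit by rewrite unitfE.
  have : FinRing.Unit uc \in <[g]>%g by rewrite -Hg inE.
  case/cycleP => i Hi; exists i; by rewrite -FinRing.val_unitX -Hi.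
have odd_of : forall c : F, c != 0 -> (forall y, y ^+ 2 != c) ->
    exists2 i, odd i & c = FinRing.uval g ^+ i.
  move=> c c0 nc; have [i Hi] := pw c c0; exists i => //.
  apply/negPn/negP => ei; move: (nc (FinRing.uval g ^+ i./2)).
  rewrite -exprM Hi; have -> : (i./2 * 2 = i)%N by rewrite muln2 -[RHS](odd_double_half i) (negbTE ei).
  by rewrite eqxx.
have [i oi ->] := odd_of a a0 na; have [j oj ->] := odd_of b b0 nb.
exists (FinRing.uval g ^+ (i + j)./2).
rewrite -exprM -exprD; congr (_ ^+ _).
rewrite muln2 -[RHS](odd_double_half (i + j)) oddD oi oj //.
Qed.

Section R.
Variable F : finFieldType.
Hypothesis two0 : (2%:R : F) != 0.
Definition Rc (v : F) : nat := #|[set y : F | y ^+ 2 == v]|.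

Lemma Rc0 : Rc 0 = 1%N.
Proof.
rewrite /Rc (_ : [set y : F | _] = [set 0]) ?cards1 //.
by apply/setP => y; rewrite !inE sqrf_eq0.
Qed.

Lemma Rcsq s : s != 0 -> Rc (s ^+ 2) = 2%N.
Proof.
move=> s0; rewrite /Rc (_ : [set y : F | _] = [set s; -s]).
  rewrite cards2; case: eqP => // /eqP; rewrite -addr_eq0 -mulr2n -mulr_natr.
  by rewrite mulf_eq0 (negbTE s0) (negbTE two0).
by apply/setP => y; rewrite !inE eqf_sqr.
Qed.

Lemma Rcnsq v : (forall y, y ^+ 2 != v) -> Rc v = 0%N.
Proof.
move=> nv; rewrite /Rc (_ : [set y : F | _] = set0) ?cards0 //.
by apply/setP => y; rewrite !inE (negbTE (nv y)).
Qed.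
End R.
Lemma Rpair (F : finFieldType) (k v : F) : (2%:R : F) != 0 -> k != 0 ->
  (forall y, y ^+ 2 != k) -> (Rc (k * v)%R + Rc v = 2)%N.
Proof.
move=> two0 k0 nk.
have [->|v0] := eqVneq v 0; first by rewrite mulr0 Rc0.
have [/existsP [s /eqP Hs]|ns] := boolP [exists s, s ^+ 2 == v].
  have s0 : s != 0 by apply: contraNneq v0 => s0; rewrite -Hs s0 expr0n.
  rewrite -Hs Rcsq // Rcnsq //= => y; apply/eqP => Hy; move: (nk (y / s)).
  by rewrite expr_div_n Hy mulfK ?eqxx // expf_neq0.
have ns' : forall y, y ^+ 2 != v by move=> y; apply: contraNneq ns => H; apply/existsP; exists y; rewrite H.
have [t Ht] := prod_nsq k0 v0 nk ns'.
have t0 : t != 0 by apply: contraNneq (mulf_neq0 k0 v0) => t0; rewrite -Ht t0 expr0n.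
by rewrite -Ht Rcsq // Rcnsq.
Qed.

Lemma Npts_sum (F : finFieldType) (f : F -> F) :
  #|[set xy : F * F | xy.2 ^+ 2 == f xy.1]| = (\sum_x Rc (f x))%N.
Proof.
rewrite /Rc -sum1_card.
rewrite [RHS](eq_bigr (fun x => \sum_(y in [set y | y ^+ 2 == f x]) 1)%N); last by move=> x _; rewrite sum1_card.
rewrite pair_big_dep /=; apply: eq_bigl => -[x y]; by rewrite !inE.
Qed.
From mathcomp Require Import ring zify.

Theorem lemma7 (d : int) (p : nat) :
  prime p -> (2 < p)%N ->
  QR (-1 : 'F_p) ->
  (exists eps : 'F_p, eps ^+ 2 = -1 /\ QNR eps) ->
  a_p1 p d + a_p2 p d = 0.
Proof.
move=> pp p2 /andP [_ /existsP [t /andP [t0 /eqP Ht]]] [e [He /andP [e0 nQ]]].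
have two0 : (2%:R : 'F_p) != 0.
  apply/eqP => h; have := congr1 (fun z : 'F_p => nat_of_ord z) h; rewrite /= Fp_cast // (modn_small (ltnW p2)) modn_small //.
have nk : forall y : 'F_p, y ^+ 2 != - e.
  move=> y; apply/eqP => Hy; move: nQ; rewrite /QR e0 /=; apply/negP/negPn.
  apply/existsP; exists (t * y); rewrite exprMn Ht Hy mulN1r opprK eqxx andbT.
  apply: contraNneq e0 => ty0; by rewrite -[e]opprK -Hy -mulN1r -Ht -exprMn ty0 expr0n.
have k0 : - e != 0 by rewrite oppr_eq0.
have key : (Npts p (- d ^+ 2) + Npts p (d ^+ 2) = 2 * p)%N.
  rewrite /Npts (Npts_sum (fun x : 'F_p => x ^+ 3 + (- d ^+ 2)%:~R * x)) (Npts_sum (fun x : 'F_p => x ^+ 3 + (d ^+ 2)%:~R * x)) (reindex_inj (mulfI e0)) -big_split /=.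
  rewrite (eq_bigr (fun _ => 2%N)); last first.
    move=> x _.
    have e3 : e ^+ 3 = - e by rewrite exprSr He mulN1r.
    have -> : (e * x) ^+ 3 + (- d ^+ 2)%:~R * (e * x) = - e * (x ^+ 3 + (d ^+ 2)%:~R * x).
      rewrite exprMn e3 mulrNz mulrDr; congr (_ + _); by rewrite !mulNr mulrCA.
    exact: Rpair.
  by rewrite big_const_ord iter_addn_0 Fp_cast // mulnC.
rewrite /a_p1 /a_p2; move: (Npts p _) (Npts p _) key => n1 n2 key.
by rewrite addrACA -opprD -!PoszD key addnn -mul2n subrr.
Qed.
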